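(* Let $n\ge3$ and $\mathbf{q}\in(\Bbbk^\times)^n$; indices are modulo $n$. (1) Let $\alpha_0,\dots,\alpha_{n-1}\in\Bbbk^\times$ and set $p_i=\frac{\alpha_{i-1}}{\alpha_i}q_i$ for $0\le i<n$. The linear map $\phi_\alpha:A_n(\mathbf{q})\to A_n(\mathbf{p})$ with $\phi_\alpha(e_i)=e_i$, $\phi_\alpha(a_i)=\alpha_ia_i$, $\phi_\alpha(a_i^* )=a_i^*$ extends to an isomorphism. (2) Set $p_i=q_{i-1}$ for $0\le i<n$. The linear map $\psi:A_n(\mathbf{q})\to A_n(\mathbf{p})$ with $\psi(e_i)=e_{i+1}$, $\psi(a_i)=a_{i+1}$, $\psi(a_i^* )=a_{i+1}^*$ extends to an isomorphism. (3) Set $p_i=q_{n-i}^{-1}$ for $0\le i<n$. The linear map $\pi:A_n(\mathbf{q})\to A_n(\mathbf{p})$ with $\pi(e_i)=e_{n-i}$, $\pi(a_i)=a_{n-i-1}^*$, $\pi(a_i^* )=a_{n-i-1}$ extends to an isomorphism.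
   Context: $\Bbbk$ is an algebraically closed field of characteristic zero. Paths are written left to right. $A_n(\mathbf{q})=\Bbbk Q/(a_ia_i^*-q_ia_{i-1}^*a_{i-1},\ i=0,\dots,n-1)$, where $Q$ has vertices $e_0,\dots,e_{n-1}$ and arrows $a_i:e_i\to e_{i+1}$, $a_i^*:e_{i+1}\to e_i$, indices modulo $n$. *)

(* Defs.v *)
(* Concrete model of the path algebra kQ of the cyclic
   double quiver Q on vertices 'I_n and of the quotient A_n(q) = kQ / I_q. *)
From HB Require Import structures.
From mathcomp Require Import all_boot all_order all_algebra.
Set Implicit Arguments. Unset Strict Implicit. Unset Printing Implicit Defensive.
Import Order.TTheory GRing.Theory Num.Theory.
Local Open Scope ring_scope.

Section PathAlgebra.
Variables (k : fieldType) (n : nat).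

(* Arrows: (i, false) is a_i : e_i -> e_{i+1};  (i, true) is a_i^* : e_{i+1} -> e_i. *)
Definition arr := ('I_n * bool)%type.
Definition src (a : arr) : 'I_n := if a.2 then ordS a.1 else a.1.
Definition tgt (a : arr) : 'I_n := if a.2 then a.1 else ordS a.1.

(* A (candidate) path: a starting vertex and a list of arrows, read left to
   right.  It is a genuine path of Q when the arrows are composable. *)
Definition qpath := ('I_n * seq arr)%type.
Fixpoint validf (v : 'I_n) (s : seq arr) : bool :=
  if s is a :: s' then (src a == v) && validf (tgt a) s' else true.
Definition valid (p : qpath) : bool := validf p.1 p.2.
Definition endpt (p : qpath) : 'I_n := last p.1 (map tgt p.2).

(* Elements of kQ as formal finite linear combinations of paths. *)
Definition pa := seq (k * qpath)%type.
(* coefficient of a genuine path; non-paths count as 0 *)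
Definition pcoef (x : pa) (p : qpath) : k :=
  if valid p then \sum_(t <- x | t.2 == p) t.1 else 0.
Definition paeq (x y : pa) : Prop := forall p, pcoef x p = pcoef y p.

Definition padd (x y : pa) : pa := x ++ y.
Definition pscale (c : k) (x : pa) : pa := [seq (c * t.1, t.2) | t <- x].
Definition psum (xs : seq pa) : pa := foldr padd [::] xs.
Definition pmul (x y : pa) : pa :=
  flatten [seq [seq (t.1 * u.1, (t.2.1, t.2.2 ++ u.2.2))
               | u <- y & endpt t.2 == u.2.1] | t <- x].
Definition pel (p : qpath) : pa := [:: (1, p)].
Definition vtx (i : 'I_n) : pa := pel (i, [::]).
Definition arrw (a : arr) : pa := pel (src a, [:: a]).
Definition a_ (i : 'I_n) : pa := arrw (i, false).
Definition as_ (i : 'I_n) : pa := arrw (i, true).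
Definition pone : pa := psum [seq vtx i | i <- enum 'I_n].

Definition qrel (q : 'I_n -> k) (i : 'I_n) : pa :=
  padd (pmul (a_ i) (as_ i))
       (pscale (- q i) (pmul (as_ (ord_pred i)) (a_ (ord_pred i)))).

(* the two-sided ideal I_q generated by the relations *)
Definition inI (q : 'I_n -> k) (x : pa) : Prop :=
  exists s : seq (k * qpath * 'I_n * qpath),
    paeq x (psum [seq pscale t.1.1.1 (pmul (pmul (pel t.1.1.2) (qrel q t.1.2)) (pel t.2))
                 | t <- s]).

Definition eqA (q : 'I_n -> k) (x y : pa) : Prop := inI q (padd x (pscale (-1) y)).

(* The unique algebra map kQ -> kQ determined by images of vertices and arrows
   (path e_v a_1 ... a_m  |->  fe v * fa a_1 * ... * fa a_m), extended linearly. *)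
Definition pimg (fe : 'I_n -> pa) (fa : arr -> pa) (p : qpath) : pa :=
  foldl pmul (fe p.1) (map fa p.2).
Definition plift (fe : 'I_n -> pa) (fa : arr -> pa) (x : pa) : pa :=
  psum [seq pscale t.1 (pimg fe fa t.2) | t <- x].

Definition induces_iso (q p : 'I_n -> k) (f : pa -> pa) : Prop :=
  (forall x, inI q x -> inI p (f x))
  /\ (forall x y, eqA p (f (padd x y)) (padd (f x) (f y)))
  /\ (forall c x, eqA p (f (pscale c x)) (pscale c (f x)))
  /\ (forall x y, eqA p (f (pmul x y)) (pmul (f x) (f y)))
  /\ eqA p (f pone) pone
  /\ (forall x, inI p (f x) -> inI q x)
  /\ (forall y, exists x, eqA p (f x) y).

End PathAlgebra.

(* Main.v *)
From HB Require Import structures.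
From mathcomp Require Import all_boot all_order all_algebra.
From mathcomp Require Import ring zify.
Require Import Defs.
Import GRing.Theory.
Local Open Scope ring_scope.
Set Implicit Arguments. Unset Strict Implicit.

Section Gen.
Variables (k : fieldType) (n : nat).
Local Notation pa := (pa k n).
Local Notation qpath := (qpath n).
Local Notation arr := (arr n).

Definition lsum (g : qpath -> k) (x : pa) : k := \sum_(t <- x) t.1 * g t.2.
Definition adm (g : qpath -> k) := forall w, ~~ valid w -> g w = 0.
Definition Rq (x y : pa) := forall g, adm g -> lsum g x = lsum g y.
Definition Eq (x y : pa) := forall g, lsum g x = lsum g y.

Lemma eq_lsum g g' x : g =1 g' -> lsum g x = lsum g' x.
Proof. by move=> e; apply: eq_bigr => t _; rewrite e. Qed.

Lemma lsum_cat g x y : lsum g (x ++ y) = lsum g x + lsum g y.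
Proof. by rewrite /lsum big_cat. Qed.

Lemma lsum_nil g : lsum g [::] = 0.
Proof. by rewrite /lsum big_nil. Qed.

Lemma lsum_scale g c x : lsum g (pscale c x) = c * lsum g x.
Proof. by rewrite /lsum /pscale big_map mulr_sumr; apply: eq_bigr => t _ /=; rewrite mulrA. Qed.

Lemma lsum_psum g xs : lsum g (psum xs) = \sum_(x <- xs) lsum g x.
Proof. elim: xs => [|x xs IH]; first by rewrite big_nil lsum_nil.
by rewrite big_cons /= /padd lsum_cat IH. Qed.

Lemma lsum_pel g p : lsum g (@pel k n p) = g p.
Proof. by rewrite /lsum /pel big_seq1 mul1r. Qed.

Lemma lsum_pmul g x y : lsum g (pmul x y) =
  lsum (fun w => lsum (fun u => (endpt w == u.1)%:R * g (w.1, w.2 ++ u.2)) y) x.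
Proof.
rewrite /lsum /pmul big_flatten /= big_map; apply: eq_bigr => t _.
rewrite big_map big_filter big_mkcond mulr_sumr; apply: eq_bigr => u _ /=.
by case: (endpt t.2 == u.2.1); rewrite /= ?mul1r ?mul0r ?mulr0 ?mulrA.
Qed.

Lemma lsum_pmul_r g x y : lsum g (pmul x y) =
  lsum (fun u => lsum (fun w => (endpt w == u.1)%:R * g (w.1, w.2 ++ u.2)) x) y.
Proof.
rewrite lsum_pmul /lsum.
under eq_bigr do rewrite mulr_sumr.
rewrite exchange_big; apply: eq_bigr => u _; rewrite mulr_sumr; apply: eq_bigr => t _.
by rewrite !mulrA [t.1 * u.1]mulrC.
Qed.

Lemma pcoef_lsum x p : pcoef x p = lsum (fun w => ((valid p) && (w == p))%:R) x.
Proof.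
rewrite /pcoef /lsum; case: (valid p) => /=; last by rewrite big1 // => t _; rewrite mulr0.
rewrite big_mkcond; apply: eq_bigr => t _; by case: (t.2 == p); rewrite /= ?mulr1 ?mulr0.
Qed.

Lemma Rq_paeq x y : Rq x y -> paeq x y.
Proof.
move=> h p; rewrite !pcoef_lsum; apply: h => w /negbTE vw.
by case: eqP => [<-|]; rewrite ?vw ?andbF.
Qed.

Lemma sum_ind (W : seq qpath) (x : qpath) (F : qpath -> k) : uniq W -> x \in W ->
  \sum_(w <- W) (x == w)%:R * F w = F x.
Proof.
move=> uW xW; rewrite (bigD1_seq x) //= eqxx mul1r big1 ?addr0 //.
move=> w; rewrite eq_sym => /negbTE ->; by rewrite mul0r.
Qed.

Lemma lsum_part (W : seq qpath) g x : uniq W -> {subset map snd x <= W} -> adm g ->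
  lsum g x = \sum_(w <- W) pcoef x w * g w.
Proof.
move=> uW sW ag; rewrite /lsum.
transitivity (\sum_(t <- x) \sum_(w <- W) (t.2 == w)%:R * (t.1 * g w)).
  apply: eq_big_seq => t tx; rewrite (sum_ind (fun w => t.1 * g w)) //.
  by apply: sW; apply: map_f.
transitivity (\sum_(w <- W) \sum_(t <- x) (t.2 == w)%:R * (t.1 * g w)).
  exact: exchange_big.
apply: eq_bigr => w _.
rewrite /pcoef; case vw: (valid w); last by rewrite ag ?vw // mulr0 big1 // => t _; rewrite !mulr0.
rewrite mulr_suml [RHS]big_mkcond; apply: eq_bigr => t _.
by case: (t.2 == w); rewrite /= ?mul1r ?mul0r.
Qed.

Lemma paeq_Rq x y : paeq x y -> Rq x y.
Proof.
move=> h g ag; set W := undup (map snd (x ++ y)).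
have uW : uniq W by apply: undup_uniq.
rewrite (lsum_part (x:=x) uW _ ag) ?(lsum_part (x:=y) uW _ ag).
- by apply: eq_bigr => w _; rewrite h.
- by move=> w wy; rewrite mem_undup map_cat mem_cat wy orbT.
- by move=> w wy; rewrite mem_undup map_cat mem_cat wy.
Qed.


Lemma pmul_E x x' y y' : Eq x x' -> Eq y y' -> Eq (pmul x y) (pmul x' y').
Proof.
move=> hx hy g; rewrite !lsum_pmul hx; apply: eq_lsum => w; exact: hy.
Qed.

Lemma foldl_E (X X' : pa) l : Eq X X' -> Eq (foldl (@pmul k n) X l) (foldl (@pmul k n) X' l).
Proof.
elim: l X X' => [|y l IH] X X' h //=; apply: IH; apply: pmul_E => //.
Qed.

Lemma foldl_nil (l : seq pa) : foldl (@pmul k n) [::] l = [::].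
Proof. by elim: l. Qed.

Lemma endpt_rcons (w : 'I_n) s (a : arr) : endpt (w, s ++ [:: a]) = tgt a.
Proof. by rewrite /endpt /= map_cat last_cat. Qed.

Lemma validf_cat (v : 'I_n) s1 s2 :
  validf v (s1 ++ s2) = validf v s1 && validf (last v (map (@tgt n) s1)) s2.
Proof.
elim: s1 v => [|a s1 IH] v //=; by rewrite IH andbA.
Qed.

Lemma lsum_plift g fe fa (x : pa) :
  lsum g (plift fe fa x) = lsum (fun w => lsum g (pimg fe fa w)) x.
Proof.
rewrite /plift lsum_psum big_map; apply: eq_bigr => t _; by rewrite lsum_scale.
Qed.

Lemma lsum_qrel g q (i : 'I_n) : lsum g (qrel q i) =
  g (i, [:: (i, false); (i, true)]) -
  q i * g (i, [:: (ord_pred i, true); (ord_pred i, false)]).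
Proof.
rewrite /qrel /padd lsum_cat lsum_scale !lsum_pmul /a_ /as_ /arrw.
rewrite /lsum /pel !big_seq1 /= /endpt /src /tgt /= eqxx ord_predK !mul1r.
by rewrite eqxx mul1r mulNr.
Qed.

Lemma Eq_Rq x y : Eq x y -> Rq x y.
Proof. by move=> h g _. Qed.

End Gen.

Section PathMap.
Variables (k : fieldType) (n : nat).
Local Notation pa := (pa k n).
Local Notation qpath := (qpath n).
Local Notation arr := (arr n).
Variables (sg : 'I_n -> 'I_n) (tau : arr -> arr) (c : arr -> k)
  (fe : 'I_n -> pa) (fa : arr -> pa).
Hypotheses (Hinj : injective sg) (Hsrc : forall a, src (tau a) = sg (src a))
  (Htgt : forall a, tgt (tau a) = sg (tgt a))
  (HE : forall v, Eq (fe v) (pscale 1 (pel k (sg v, [::]))))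
  (HF : forall a, Eq (fa a) (pscale (c a) (pel k (src (tau a), [:: tau a])))).

Definition cp (s : seq arr) : k := \prod_(a <- s) c a.

Lemma pimg_gen s : forall v c0 w0 s0 g, endpt (w0, s0) = sg v ->
  lsum g (foldl (@pmul k n) (pscale c0 (pel k (w0, s0))) (map fa s)) =
  (validf v s)%:R * (c0 * cp s) * g (w0, s0 ++ map tau s).
Proof.
elim: s => [|a s IH] v c0 w0 s0 g he /=.
  by rewrite /lsum big_seq1 /cp big_nil cats0 mulr1 !mul1r.
have E1 : Eq (pmul [:: (c0 * 1, (w0, s0))] (fa a))
   (if src a == v then pscale (c0 * c a) (pel k (w0, s0 ++ [:: tau a])) else [::]).
  move=> g'; rewrite lsum_pmul {1}/lsum big_seq1 mulr1 /=.
  rewrite (HF a) lsum_scale /lsum big_seq1 mul1r /= he Hsrc (inj_eq Hinj) eq_sym.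
  case: (src a == v); rewrite ?lsum_scale /lsum ?big_seq1 ?big_nil ?mul1r ?mul0r ?mulr0 //.
  by rewrite /= mulr1 mulrA.
rewrite (foldl_E _ E1).
case: (eqVneq (src a) v) => [_|ne] /=; last by rewrite foldl_nil lsum_nil mul0r mul0r.
rewrite (IH (tgt a)); last by rewrite endpt_rcons Htgt.
by rewrite -catA /cp big_cons !mulrA.
Qed.

Lemma pimg_spec v s g : lsum g (pimg fe fa (v, s)) =
  (validf v s)%:R * cp s * g (sg v, map tau s).
Proof.
rewrite /pimg /= (foldl_E _ (HE v)) (@pimg_gen s v 1 (sg v) [::]) //.
by rewrite mul1r.
Qed.


Local Notation f := (plift fe fa).

Lemma f_adm g : adm g -> adm (fun w => lsum g (pimg fe fa w)).
Proof.
move=> _ [v s] /negbTE vw; rewrite pimg_spec; rewrite /valid /= in vw.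
by rewrite vw !mul0r.
Qed.

Lemma f_Rq x y : Rq x y -> Rq (f x) (f y).
Proof. move=> h g ag; rewrite !lsum_plift; apply: h; exact: f_adm. Qed.

Lemma f_add x y : Eq (f (padd x y)) (padd (f x) (f y)).
Proof. by move=> g; rewrite lsum_plift /padd !lsum_cat !lsum_plift. Qed.

Lemma f_scale a x : Eq (f (pscale a x)) (pscale a (f x)).
Proof.
by move=> g; rewrite lsum_plift !lsum_scale lsum_plift.
Qed.

Lemma f_pel w : Eq (f (pel k w)) (pscale ((valid w)%:R * cp w.2) (pel k (sg w.1, map tau w.2))).
Proof.
move=> g; rewrite lsum_plift {1}/lsum big_seq1 mul1r lsum_scale.
case: w => v s; rewrite pimg_spec /lsum big_seq1 mul1r //.
Qed.

Lemma endpt_img v s : endpt (sg v, map tau s) = sg (endpt (v, s)).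
Proof.
rewrite /endpt /= -map_comp (eq_map Htgt) map_comp; exact: last_map.
Qed.

Lemma validf_img v s : validf (sg v) (map tau s) = validf v s.
Proof.
elim: s v => [|a s IH] v //=; by rewrite Hsrc (inj_eq Hinj) Htgt IH.
Qed.

Lemma pimg_mul t u g : lsum g (pmul (pimg fe fa t) (pimg fe fa u)) =
  (endpt t == u.1)%:R * lsum g (pimg fe fa (t.1, t.2 ++ u.2)).
Proof.
case: t => v s; case: u => w r /=.
rewrite lsum_pmul pimg_spec pimg_spec pimg_spec /= endpt_img (inj_eq Hinj).
rewrite validf_cat map_cat /cp big_cat /=.
rewrite /endpt /=; case: eqP => [->|_] /=; last by rewrite !(mul0r, mulr0).
case: (validf v s); case: (validf w r) => /=; ring.
Qed.

Lemma f_mul x y : Eq (f (pmul x y)) (pmul (f x) (f y)).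
Proof.
move=> g; rewrite lsum_plift lsum_pmul.
transitivity (lsum (fun t => lsum (fun u => lsum g (pmul (pimg fe fa t) (pimg fe fa u))) y) x).
  by apply: eq_lsum => t; apply: eq_lsum => u; rewrite pimg_mul.
rewrite [RHS]lsum_pmul lsum_plift; apply: eq_lsum => t /=.
transitivity (lsum g (pmul (pimg fe fa t) (f y))); last by rewrite lsum_pmul.
rewrite lsum_pmul_r lsum_plift; apply: eq_lsum => u; by rewrite lsum_pmul_r.
Qed.

Lemma f_pone : Eq (f (pone k n)) (pone k n).
Proof.
move=> g; rewrite lsum_plift /pone !lsum_psum !big_map.
have EE : forall F : 'I_n -> k, \sum_(i <- Finite.enum 'I_n) F i = \sum_i F i by [].
rewrite !EE.
rewrite [RHS](reindex_inj Hinj) /=; apply: eq_bigr => i _.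
rewrite /vtx /lsum /pel !big_seq1 !mul1r.
have := pimg_spec i [::] g; rewrite /lsum => ->.
by rewrite /cp big_nil !mul1r.
Qed.

Lemma f_psum xs g : lsum g (f (psum xs)) = \sum_(x <- xs) lsum g (f x).
Proof.
rewrite lsum_plift lsum_psum; apply: eq_bigr => x _; by rewrite lsum_plift.
Qed.

Lemma pmul_scale_l a (x y : pa) : Eq (pmul (pscale a x) y) (pscale a (pmul x y)).
Proof. by move=> g; rewrite !lsum_pmul !lsum_scale lsum_pmul. Qed.

Lemma pmul_scale_r a (x y : pa) : Eq (pmul x (pscale a y)) (pscale a (pmul x y)).
Proof. by move=> g; rewrite !lsum_pmul_r !lsum_scale lsum_pmul_r. Qed.

Lemma pscale_E a (x y : pa) : Eq x y -> Eq (pscale a x) (pscale a y).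
Proof. by move=> h g; rewrite !lsum_scale h. Qed.

Lemma f_qrel q i g : lsum g (f (qrel q i)) =
  c (i,false) * (c (i,true) * 1) * g (sg i, [:: tau (i,false); tau (i,true)]) -
  q i * (c (ord_pred i, true) * (c (ord_pred i, false) * 1) *
     g (sg i, [:: tau (ord_pred i, true); tau (ord_pred i, false)])).
Proof.
rewrite lsum_plift lsum_qrel !pimg_spec /cp !big_cons !big_nil /= /src /tgt /= eqxx ord_predK eqxx /=.
by rewrite !eqxx /= !mul1r.
Qed.

Variables (q p d : 'I_n -> k) (j : 'I_n -> 'I_n).
Hypothesis Hrel : forall i, Eq (f (qrel q i)) (pscale (d i) (qrel p (j i))).

Definition conv (t : k * qpath * 'I_n * qpath) : k * qpath * 'I_n * qpath :=
  (t.1.1.1 * ((valid t.1.1.2)%:R * cp t.1.1.2.2) * d t.1.2 * ((valid t.2)%:R * cp t.2.2),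
   (sg t.1.1.2.1, map tau t.1.1.2.2), j t.1.2, (sg t.2.1, map tau t.2.2)).

Lemma f_gen t g :
  lsum g (f (pscale t.1.1.1 (pmul (pmul (pel k t.1.1.2) (qrel q t.1.2)) (pel k t.2)))) =
  lsum g (pscale (conv t).1.1.1 (pmul (pmul (pel k (conv t).1.1.2) (qrel p (conv t).1.2)) (pel k (conv t).2))).
Proof.
case: t => [[[a u] i] w] /=.
rewrite (f_scale _ _ g) !lsum_scale (f_mul _ _ g).
rewrite (pmul_E (f_mul _ _) (f_pel w) g).
rewrite (pmul_E (pmul_E (f_pel u) (Hrel i)) (fun g => erefl) g).
rewrite (pmul_scale_r _ _ _ g) lsum_scale (pmul_E (pmul_scale_l _ _ _) (fun g => erefl) g).
rewrite (pmul_scale_l _ _ _ g) lsum_scale.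
rewrite (pmul_E (pmul_scale_r _ _ _) (fun g => erefl) g) (pmul_scale_l _ _ _ g) lsum_scale.
ring.
Qed.

Lemma f_wd x : inI q x -> inI p (f x).
Proof.
case=> s h; exists (map conv s); apply: Rq_paeq => g ag.
rewrite (f_Rq (paeq_Rq h) ag) f_psum lsum_psum big_map big_map.
rewrite big_map; apply: eq_bigr => t _; exact: f_gen.
Qed.

End PathMap.

Section Iso.
Variables (k : fieldType) (n : nat).
Local Notation pa := (pa k n).
Local Notation qpath := (qpath n).
Local Notation arr := (arr n).

Lemma comp_Rq (sA sB : 'I_n -> 'I_n) (tA tB : arr -> arr) (cA cB : arr -> k)
  (feA feB : 'I_n -> pa) (faA faB : arr -> pa)
  (HinjA : injective sA) (HsrcA : forall a, src (tA a) = sA (src a))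
  (HtgtA : forall a, tgt (tA a) = sA (tgt a))
  (HEA : forall v, Eq (feA v) (pscale 1 (pel k (sA v, [::]))))
  (HFA : forall a, Eq (faA a) (pscale (cA a) (pel k (src (tA a), [:: tA a]))))
  (HinjB : injective sB) (HsrcB : forall a, src (tB a) = sB (src a))
  (HtgtB : forall a, tgt (tB a) = sB (tgt a))
  (HEB : forall v, Eq (feB v) (pscale 1 (pel k (sB v, [::]))))
  (HFB : forall a, Eq (faB a) (pscale (cB a) (pel k (src (tB a), [:: tB a]))))
  (Hs : forall v, sB (sA v) = v) (Ht : forall a, tB (tA a) = a)
  (Hc : forall a, cA a * cB (tA a) = 1) (x : pa) :
  Rq (plift feB faB (plift feA faA x)) x.
Proof.
move=> g ag; rewrite lsum_plift lsum_plift; apply: eq_lsum => -[v s] /=.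
rewrite (pimg_spec HinjA HsrcA HtgtA HEA HFA) (pimg_spec HinjB HsrcB HtgtB HEB HFB).
rewrite (validf_img HinjA HsrcA HtgtA) Hs -map_comp (eq_map Ht) map_id.
have H1 : cp cA s * cp cB [seq tA i | i <- s] = 1.
  by rewrite /cp big_map -big_split /= big1 // => a _; rewrite Hc.
case vs: (validf v s).
  transitivity (cp cA s * cp cB [seq tA i | i <- s] * g (v, s)); first by rewrite /= !mul1r mulrA.
  by rewrite H1 mul1r.
by rewrite (ag (v, s)) ?mulr0 // /valid /= vs.
Qed.


Lemma Rq_eqA q (x y : pa) : Rq x y -> eqA q x y.
Proof.
move=> h; exists [::]; apply: Rq_paeq => g ag.
rewrite /padd lsum_cat lsum_scale (h g ag) /psum /= lsum_nil; ring.
Qed.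

Lemma inI_Rq q (x y : pa) : inI q x -> Rq x y -> inI q y.
Proof.
case=> s h hxy; exists s; apply: Rq_paeq => g ag.
by rewrite -(hxy g ag) (paeq_Rq h ag).
Qed.

Definition gfa (tau : arr -> arr) (c : arr -> k) (a : arr) : pa :=
  pscale (c a) (pel k (src (tau a), [:: tau a])).
Definition gfe (sg : 'I_n -> 'I_n) (v : 'I_n) : pa := vtx k (sg v).

Theorem gen_iso (q p : 'I_n -> k) (s1 s2 : 'I_n -> 'I_n) (t1 t2 : arr -> arr)
  (c1 c2 : arr -> k) (fe : 'I_n -> pa) (fa : arr -> pa)
  (d1 d2 : 'I_n -> k) (j1 j2 : 'I_n -> 'I_n)
  (Hsrc1 : forall a, src (t1 a) = s1 (src a))
  (Htgt1 : forall a, tgt (t1 a) = s1 (tgt a))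
  (Hsrc2 : forall a, src (t2 a) = s2 (src a))
  (Htgt2 : forall a, tgt (t2 a) = s2 (tgt a))
  (HE : forall v, Eq (fe v) (pscale 1 (pel k (s1 v, [::]))))
  (HF : forall a, Eq (fa a) (pscale (c1 a) (pel k (src (t1 a), [:: t1 a]))))
  (Hs12 : forall v, s2 (s1 v) = v) (Hs21 : forall v, s1 (s2 v) = v)
  (Ht12 : forall a, t2 (t1 a) = a) (Ht21 : forall a, t1 (t2 a) = a)
  (Hc12 : forall a, c1 a * c2 (t1 a) = 1) (Hc21 : forall a, c2 a * c1 (t2 a) = 1)
  (Hrel1 : forall i, Eq (plift fe fa (qrel q i)) (pscale (d1 i) (qrel p (j1 i))))
  (Hrel2 : forall i, Eq (plift (gfe s2) (gfa t2 c2) (qrel p i)) (pscale (d2 i) (qrel q (j2 i)))) :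
  induces_iso q p (plift fe fa).
Proof.
have Hinj1 : injective s1 := can_inj Hs12.
have Hinj2 : injective s2 := can_inj Hs21.
have HE2 : forall v, Eq (gfe s2 v) (pscale 1 (pel k (s2 v, [::]))).
  by move=> v g; rewrite lsum_scale mul1r.
have HF2 : forall a, Eq (gfa t2 c2 a) (pscale (c2 a) (pel k (src (t2 a), [:: t2 a]))).
  by move=> a g.
split; first exact: (f_wd Hinj1 Hsrc1 Htgt1 HE HF Hrel1).
split; first by move=> x y; apply: Rq_eqA; apply: Eq_Rq; apply: f_add.
split; first by move=> a x; apply: Rq_eqA; apply: Eq_Rq; apply: f_scale.
split; first by move=> x y; apply: Rq_eqA; apply: Eq_Rq; apply: (f_mul Hinj1 Hsrc1 Htgt1 HE HF).
split; first by apply: Rq_eqA; apply: Eq_Rq; apply: (f_pone Hinj1 Hsrc1 Htgt1 HE HF).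
split.
  move=> x h; have := f_wd Hinj2 Hsrc2 Htgt2 HE2 HF2 Hrel2 h.
  move/inI_Rq; apply.
  exact: (comp_Rq Hinj1 Hsrc1 Htgt1 HE HF Hinj2 Hsrc2 Htgt2 HE2 HF2 Hs12 Ht12 Hc12).
move=> y; exists (plift (gfe s2) (gfa t2 c2) y); apply: Rq_eqA.
exact: (comp_Rq Hinj2 Hsrc2 Htgt2 HE2 HF2 Hinj1 Hsrc1 Htgt1 HE HF Hs21 Ht21 Hc21).
Qed.

End Iso.

Lemma L3 n (i : 'I_n) : ordS (rev_ord (ordS i)) = rev_ord i.
Proof.
apply: val_inj => /=. have := ltn_ord i => hi.
case: (ltnP i.+1 n) => h.
  rewrite (modn_small h) modn_small; lia.
have e : i.+1 = n by lia.
rewrite e modnn (_ : (n - 1).+1 = n); last by lia.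
rewrite modnn; lia.
Qed.

Lemma part1 (k : fieldType) (n : nat) (q : 'I_n -> k) (alpha : 'I_n -> k)
  (ha : forall i, alpha i != 0) :
     induces_iso q (fun i => alpha (ord_pred i) / alpha i * q i)
       (plift (@vtx k n)
             (fun a : arr n => if a.2 then @as_ k n a.1 else pscale (alpha a.1) (@a_ k n a.1))).
Proof.
pose c1 := fun a : arr n => if a.2 then 1 else alpha a.1.
pose c2 := fun a : arr n => if a.2 then 1 else (alpha a.1)^-1.
have Hinj : injective (fun v : 'I_n => v) by [].
have Hsrc : forall a : arr n, src a = src a by [].
have Htgt : forall a : arr n, tgt a = tgt a by [].
have HE : forall v, Eq (@vtx k n v) (pscale 1 (pel k (v, [::]))).
  by move=> v g; rewrite lsum_scale mul1r.
have HF : forall a : arr n, Eq (if a.2 then @as_ k n a.1 else pscale (alpha a.1) (@a_ k n a.1))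
    (pscale (c1 a) (pel k (src a, [:: a]))).
  by case=> i [] g; rewrite ?lsum_scale /c1 /= ?mul1r.
have HE2 : forall v, Eq (@gfe k n (fun v : 'I_n => v) v) (pscale 1 (pel k (v, [::]))).
  by move=> v g; rewrite lsum_scale mul1r.
have HF2 : forall a : arr n, Eq (@gfa k n (fun a => a) c2 a) (pscale (c2 a) (pel k (src a, [:: a]))).
  by move=> a g.
apply: (@gen_iso k n _ _ (fun v => v) (fun v => v) (fun a => a) (fun a => a) c1 c2 _ _
          (fun i => alpha i) (fun i => (alpha i)^-1) (fun i => i) (fun i => i)) => //.
- by case=> i []; rewrite /c1 /c2 /= ?mulr1 ?divff.
- by case=> i []; rewrite /c1 /c2 /= ?mulr1 ?mulVf.
- move=> i g; rewrite (f_qrel Hinj Hsrc Htgt HE HF) lsum_scale lsum_qrel /c1 /c2 /=.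
  field; exact: ha.
- move=> i g; rewrite (f_qrel Hinj Hsrc Htgt HE2 HF2) lsum_scale lsum_qrel /c1 /c2 /=.
  by field; rewrite !ha.
Qed.

Lemma part2 (k : fieldType) (n : nat) (q : 'I_n -> k) :
  induces_iso q (fun i => q (ord_pred i))
    (plift (fun i => @vtx k n (ordS i)) (fun a : arr n => @arrw k n (ordS a.1, a.2))).
Proof.
pose t1 := fun a : arr n => (ordS a.1, a.2).
pose t2 := fun a : arr n => (ord_pred a.1, a.2).
pose c1 := fun a : arr n => (1 : k).
have Hinj1 : injective (@ordS n) := can_inj (@ordSK n).
have Hinj2 : injective (@ord_pred n) := can_inj (@ord_predK n).
have Hsrc1 : forall a, src (t1 a) = ordS (src a) by case=> i [].
have Htgt1 : forall a, tgt (t1 a) = ordS (tgt a) by case=> i [].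
have Hsrc2 : forall a, src (t2 a) = ord_pred (src a).
  by case=> i [] //=; rewrite /t2 /src /= ord_predK ordSK.
have Htgt2 : forall a, tgt (t2 a) = ord_pred (tgt a).
  by case=> i [] //=; rewrite /t2 /tgt /= ord_predK ordSK.
have HE : forall v, Eq (@vtx k n (ordS v)) (pscale 1 (pel k (ordS v, [::]))).
  by move=> v g; rewrite lsum_scale mul1r.
have HF : forall a : arr n, Eq (@arrw k n (ordS a.1, a.2)) (pscale (c1 a) (pel k (src (t1 a), [:: t1 a]))).
  by move=> a g; rewrite lsum_scale mul1r.
have HE2 : forall v, Eq (@gfe k n (@ord_pred n) v) (pscale 1 (pel k (ord_pred v, [::]))).
  by move=> v g; rewrite lsum_scale mul1r.
have HF2 : forall a : arr n, Eq (@gfa k n t2 c1 a) (pscale (c1 a) (pel k (src (t2 a), [:: t2 a]))).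
  by move=> a g.
apply: (@gen_iso k n _ _ (@ordS n) (@ord_pred n) t1 t2 c1 c1 _ _
          (fun i => 1) (fun i => 1) (@ordS n) (@ord_pred n)) => //.
- exact: ordSK.
- exact: ord_predK.
- by case=> i b; rewrite /t1 /t2 /= ordSK.
- by case=> i b; rewrite /t1 /t2 /= ord_predK.
- by move=> a; rewrite /c1 mulr1.
- by move=> a; rewrite /c1 mulr1.
- move=> i g; rewrite (f_qrel Hinj1 Hsrc1 Htgt1 HE HF) lsum_scale lsum_qrel /c1 /t1 /=.
  rewrite ord_predK ordSK; ring.
- move=> i g; rewrite (f_qrel Hinj2 Hsrc2 Htgt2 HE2 HF2) lsum_scale lsum_qrel /c1 /t2 /=.
  ring.
Qed.

Lemma L4 n (i : 'I_n) : rev_ord (ord_pred i) = ordS (rev_ord i).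
Proof. by rewrite -(L3 (ord_pred i)) ord_predK. Qed.

Lemma S3K n (v : 'I_n) : ordS (rev_ord (ordS (rev_ord v))) = v.
Proof. by rewrite L3 rev_ordK. Qed.

Section P3.
Variables (k : fieldType) (n : nat).
Let s1 := fun v : 'I_n => ordS (rev_ord v).
Let t1 := fun a : arr n => (rev_ord a.1, ~~ a.2).
Let c1 := fun a : arr n => (1 : k).

Lemma inj3 : injective s1.
Proof. by move=> x y /(congr1 s1); rewrite /s1 !S3K. Qed.
Lemma src3 a : src (t1 a) = s1 (src a).
Proof. by case: a => i [] //=; rewrite /t1 /s1 /src /= L3. Qed.
Lemma tgt3 a : tgt (t1 a) = s1 (tgt a).
Proof. by case: a => i [] //=; rewrite /t1 /s1 /tgt /= L3. Qed.

Lemma rel3 (fe : 'I_n -> pa k n) (fa : arr n -> pa k n)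
  (HE : forall v, Eq (fe v) (pscale 1 (pel k (s1 v, [::]))))
  (HF : forall a, Eq (fa a) (pscale (c1 a) (pel k (src (t1 a), [:: t1 a]))))
  (q p : 'I_n -> k) (hq : forall i, q i != 0) (hp : forall i, p (s1 i) = (q i)^-1) i :
  Eq (plift fe fa (qrel q i)) (pscale (- q i) (qrel p (s1 i))).
Proof.
move=> g; rewrite (f_qrel inj3 src3 tgt3 HE HF) lsum_scale lsum_qrel /c1 /t1 /s1 /=.
rewrite L4 ordSK.
have := hp i; rewrite /s1 => ->.
by field; rewrite hq.
Qed.

End P3.

Lemma part3 (k : fieldType) (n : nat) (q : 'I_n -> k) (hq : forall i, q i != 0) :
  induces_iso q (fun i => (q (ordS (rev_ord i)))^-1)
    (plift (fun i => @vtx k n (ordS (rev_ord i)))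
          (fun a : arr n => @arrw k n (rev_ord a.1, ~~ a.2))).
Proof.
pose s1 := fun v : 'I_n => ordS (rev_ord v).
pose t1 := fun a : arr n => (rev_ord a.1, ~~ a.2).
pose c1 := fun a : arr n => (1 : k).
have HE : forall v, Eq (@vtx k n (s1 v)) (pscale 1 (pel k (s1 v, [::]))).
  by move=> v g; rewrite lsum_scale mul1r.
have HF : forall a : arr n, Eq (@arrw k n (t1 a)) (pscale (c1 a) (pel k (src (t1 a), [:: t1 a]))).
  by move=> a g; rewrite lsum_scale mul1r.
have HE2 : forall v, Eq (@gfe k n s1 v) (pscale 1 (pel k (s1 v, [::]))).
  by move=> v g; rewrite lsum_scale mul1r.
have HF2 : forall a : arr n, Eq (@gfa k n t1 c1 a) (pscale (c1 a) (pel k (src (t1 a), [:: t1 a]))).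
  by move=> a g.
have hp : forall i, q (s1 i) != 0 by move=> i; exact: hq.
apply: (@gen_iso k n _ _ s1 s1 t1 t1 c1 c1 _ _
          (fun i => - q i) (fun i => - (q (s1 i))^-1) s1 s1) => //.
- exact: src3.
- exact: tgt3.
- exact: src3.
- exact: tgt3.
- exact: S3K.
- exact: S3K.
- by case=> i b; rewrite /t1 /= rev_ordK negbK.
- by case=> i b; rewrite /t1 /= rev_ordK negbK.
- by move=> a; rewrite /c1 mulr1.
- by move=> a; rewrite /c1 mulr1.
- move=> i; apply: (rel3 HE HF hq) => j; by rewrite L3 rev_ordK.
- move=> i; apply: (rel3 HE2 HF2) => [j|j]; first by rewrite invr_eq0.
  by rewrite invrK.
Qed.

Unset Implicit Arguments.
Unset Strict Implicit.

Theorem lemma2p7 (k : closedFieldType) (hk : [pchar k] =i pred0)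
    (n : nat) (hn : (3 <= n)%N) (q : 'I_n -> k) (hq : forall i, q i != 0) :
  (* (1) *)
  (forall alpha : 'I_n -> k, (forall i, alpha i != 0) ->
     induces_iso q (fun i => alpha (ord_pred i) / alpha i * q i)
       (plift (@vtx k n)
             (fun a : arr n => if a.2 then @as_ k n a.1 else pscale (alpha a.1) (@a_ k n a.1))))
  /\
  (* (2) *)
  induces_iso q (fun i => q (ord_pred i))
    (plift (fun i => @vtx k n (ordS i)) (fun a : arr n => @arrw k n (ordS a.1, a.2)))
  /\
  (* (3) *)
  induces_iso q (fun i => (q (ordS (rev_ord i)))^-1)
    (plift (fun i => @vtx k n (ordS (rev_ord i)))
          (fun a : arr n => @arrw k n (rev_ord a.1, ~~ a.2))).
Proof.
split; first by move=> alpha ha; exact: part1.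
split; first exact: part2.
exact: part3.
Qed.
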